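(* Suppose $T\in\mathcal B(\mathcal H)$ is quasitriangular and $\{P_n\}$ is a filtration with $\|(I-P_n)TP_n\|\to0$. Let $T_n=P_nT|_{P_n\mathcal H}$. Then $j_{T_n}\to j_T$ uniformly on $\mathbb C$.
   Context: $\mathcal H$ is a complex separable Hilbert space. For an operator $A$ on a Hilbert space $\mathcal K$, $j_A(z)=\inf\{\|(A-z)h\|:h\in\mathcal K,\|h\|=1\}$. A filtration is a sequence $\{P_n\}$ of finite-rank orthogonal projections with $\operatorname{Ran}P_n\subseteq\operatorname{Ran}P_{n+1}$ and $\bigcup_n\operatorname{Ran}P_n$ dense. $T$ is quasitriangular if there is a filtration $\{P_n\}$ with $\|(I-P_n)TP_n\|\to0$. *)

(* Defs.v *)
From Stdlib Require Import Reals Lra ClassicalEpsilon.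
Open Scope R_scope.

Record Cx := mkC { Re : R; Im : R }.
Definition C0 : Cx := mkC 0 0.
Definition C1 : Cx := mkC 1 0.
Definition Cadd (a b : Cx) : Cx := mkC (Re a + Re b) (Im a + Im b).
Definition Copp (a : Cx) : Cx := mkC (- Re a) (- Im a).
Definition Cmul (a b : Cx) : Cx :=
  mkC (Re a * Re b - Im a * Im b) (Re a * Im b + Im a * Re b).
Definition Cconj (a : Cx) : Cx := mkC (Re a) (- Im a).

Definition is_glb (E : R -> Prop) (m : R) : Prop :=
  (forall x, E x -> m <= x) /\ (forall b, (forall x, E x -> b <= x) -> b <= m).
(* The greatest lower bound of E when it exists (arbitrary otherwise). *)
Definition Rinf (E : R -> Prop) : R :=
  epsilon (inhabits 0) (fun m => is_glb E m).

Record Hilbert := {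
  hcar :> Type;
  hzero : hcar;
  hadd : hcar -> hcar -> hcar;
  hopp : hcar -> hcar;
  hscal : Cx -> hcar -> hcar;
  hinner : hcar -> hcar -> Cx;  (* linear in the first argument *)
  hadd_assoc : forall x y z, hadd x (hadd y z) = hadd (hadd x y) z;
  hadd_comm : forall x y, hadd x y = hadd y x;
  hadd_0 : forall x, hadd x hzero = x;
  hadd_opp : forall x, hadd x (hopp x) = hzero;
  hscal_assoc : forall a b x, hscal a (hscal b x) = hscal (Cmul a b) x;
  hscal_1 : forall x, hscal C1 x = x;
  hscal_addv : forall a x y, hscal a (hadd x y) = hadd (hscal a x) (hscal a y);
  hscal_adds : forall a b x, hscal (Cadd a b) x = hadd (hscal a x) (hscal b x);
  hinner_add_l : forall x y z, hinner (hadd x y) z = Cadd (hinner x z) (hinner y z);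
  hinner_scal_l : forall a x y, hinner (hscal a x) y = Cmul a (hinner x y);
  hinner_sym : forall x y, hinner y x = Cconj (hinner x y);
  hinner_pos : forall x, 0 <= Re (hinner x x);
  hinner_def : forall x, hinner x x = C0 -> x = hzero;
  hcomplete : forall u : nat -> hcar,
    (forall eps, eps > 0 -> exists N, forall m n, (m >= N)%nat -> (n >= N)%nat ->
        sqrt (Re (hinner (hadd (u m) (hopp (u n))) (hadd (u m) (hopp (u n))))) < eps) ->
    exists l, forall eps, eps > 0 -> exists N, forall n, (n >= N)%nat ->
        sqrt (Re (hinner (hadd (u n) (hopp l)) (hadd (u n) (hopp l)))) < eps;
  hseparable : exists d : nat -> hcar, forall x eps, eps > 0 -> exists k,
        sqrt (Re (hinner (hadd x (hopp (d k))) (hadd x (hopp (d k))))) < eps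
}.

Section Ops.
Variable H : Hilbert.

Definition hsub (x y : H) : H := hadd H x (hopp H y).
Definition hnorm (x : H) : R := sqrt (Re (hinner H x x)).

Definition is_linear (A : H -> H) : Prop :=
  (forall x y, A (hadd H x y) = hadd H (A x) (A y)) /\
  (forall a x, A (hscal H a x) = hscal H a (A x)).

Definition bounded_op (A : H -> H) : Prop :=
  is_linear A /\ exists M, forall x, hnorm (A x) <= M * hnorm x.

Definition opnorm (A : H -> H) : R :=
  Rinf (fun M => 0 <= M /\ forall x, hnorm (A x) <= M * hnorm x).

Definition Ran (A : H -> H) (h : H) : Prop := exists y, h = A y.

Definition orth_proj (P : H -> H) : Prop :=
  is_linear P /\ (forall x, P (P x) = P x) /\
  (forall x y, hinner H (P x) y = hinner H x (P y)).

Fixpoint lincomb (k : nat) (c : nat -> Cx) (v : nat -> H) : H :=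
  match k with
  | O => hzero H
  | S k' => hadd H (lincomb k' c v) (hscal H (c k') (v k'))
  end.

Definition finite_rank (A : H -> H) : Prop :=
  exists (k : nat) (v : nat -> H), forall x, exists c, A x = lincomb k c v.

Definition filtration (P : nat -> H -> H) : Prop :=
  (forall n, orth_proj (P n) /\ finite_rank (P n)) /\
  (forall n h, Ran (P n) h -> Ran (P (S n)) h) /\
  (forall x eps, eps > 0 -> exists n h, Ran (P n) h /\ hnorm (hsub x h) < eps).

Definition off_diag (P T : H -> H) : H -> H := fun x => hsub (T (P x)) (P (T (P x))).

Definition quasitriangular (T : H -> H) : Prop :=
  exists P, filtration P /\ Un_cv (fun n => opnorm (off_diag (P n) T)) 0.

Definition j_on (S : H -> Prop) (A : H -> H) (z : Cx) : R :=
  Rinf (fun r => exists h, S h /\ hnorm h = 1 /\ r = hnorm (hsub (A h) (hscal H z h))).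

Definition jfun (A : H -> H) (z : Cx) : R := j_on (fun _ => True) A z.

(* j_{T_n} where T_n = P T |_{Ran P} : for h ∈ Ran P, T_n h = P (T h) *)
Definition j_compression (P T : H -> H) (z : Cx) : R :=
  j_on (Ran P) (fun h => P (T h)) z.

End Ops.

Arguments hsub {H}. Arguments hnorm {H}.

(* Main.v *)
Require Import Defs.
From Stdlib Require Import Reals.
From Stdlib Require Import Lra Psatz Classical ClassicalEpsilon FunctionalExtensionality PropExtensionality.
Open Scope R_scope.

Lemma Cx_ext (a b : Cx) : Re a = Re b -> Im a = Im b -> a = b.
Proof. destruct a, b; simpl; intros; subst; reflexivity. Qed.


Lemma hadd_0l (H : Hilbert) (x : H) : hadd H (hzero H) x = x.
Proof. rewrite hadd_comm. apply hadd_0. Qed.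

Lemma hadd_cancel_l (H : Hilbert) (x y z : H) : hadd H x y = hadd H x z -> y = z.
Proof.
  intro E.
  assert (E2 : hadd H (hopp H x) (hadd H x y) = hadd H (hopp H x) (hadd H x z)) by (rewrite E; reflexivity).
  rewrite !hadd_assoc in E2.
  rewrite (hadd_comm H (hopp H x) x), hadd_opp, !hadd_0l in E2. exact E2.
Qed.

Lemma opp_unique (H : Hilbert) (x y : H) : hadd H x y = hzero H -> y = hopp H x.
Proof. intro E. apply (hadd_cancel_l H x). rewrite E, hadd_opp. reflexivity. Qed.

Lemma idem_zero (H : Hilbert) (x : H) : hadd H x x = x -> x = hzero H.
Proof. intro E. apply (hadd_cancel_l H x). rewrite E, hadd_0. reflexivity. Qed.

Lemma scal_0 (H : Hilbert) (x : H) : hscal H C0 x = hzero H.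
Proof.
  apply idem_zero. rewrite <- hscal_adds. f_equal. apply Cx_ext; simpl; lra.
Qed.

Lemma scal_m1 (H : Hilbert) (x : H) : hscal H (mkC (-1) 0) x = hopp H x.
Proof.
  apply opp_unique. rewrite <- (hscal_1 H x) at 1. rewrite <- hscal_adds.
  rewrite <- (scal_0 H x). f_equal. apply Cx_ext; simpl; lra.
Qed.

Lemma inner_0l (H : Hilbert) (y : H) : hinner H (hzero H) y = C0.
Proof.
  assert (E := hinner_add_l H (hzero H) (hzero H) y). rewrite hadd_0 in E.
  destruct (hinner H (hzero H) y) as [a b]. unfold Cadd in E; simpl in E.
  injection E; intros; apply Cx_ext; simpl; lra.
Qed.

Lemma inner_opp_l (H : Hilbert) (x y : H) : hinner H (hopp H x) y = Copp (hinner H x y).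
Proof.
  assert (E := hinner_add_l H x (hopp H x) y). rewrite hadd_opp, inner_0l in E.
  destruct (hinner H x y) as [a b]; destruct (hinner H (hopp H x) y) as [c d].
  unfold Cadd, C0 in E; simpl in E. injection E; intros; apply Cx_ext; simpl; lra.
Qed.

Lemma inner_Re_sym (H : Hilbert) (x y : H) : Re (hinner H y x) = Re (hinner H x y).
Proof. rewrite hinner_sym. reflexivity. Qed.
Lemma inner_Im_sym (H : Hilbert) (x y : H) : Im (hinner H y x) = - Im (hinner H x y).
Proof. rewrite hinner_sym. reflexivity. Qed.

Lemma inner_self_Im (H : Hilbert) (x : H) : Im (hinner H x x) = 0.
Proof. assert (E := inner_Im_sym H x x). lra. Qed.

Lemma inner_add_r (H : Hilbert) (x y z : H) : hinner H x (hadd H y z) = Cadd (hinner H x y) (hinner H x z).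
Proof.
  apply Cx_ext.
  - rewrite inner_Re_sym, hinner_add_l. simpl. rewrite !(inner_Re_sym H x). reflexivity.
  - rewrite inner_Im_sym, hinner_add_l. simpl. rewrite !(inner_Im_sym H _ x). lra.
Qed.

Lemma inner_scal_r (H : Hilbert) (a : Cx) (x y : H) : hinner H x (hscal H a y) = Cmul (Cconj a) (hinner H x y).
Proof.
  apply Cx_ext.
  - rewrite inner_Re_sym, hinner_scal_l. simpl. rewrite (inner_Re_sym H x), (inner_Im_sym H x). lra.
  - rewrite inner_Im_sym, hinner_scal_l. simpl. rewrite (inner_Re_sym H x), (inner_Im_sym H x). lra.
Qed.

Lemma inner_opp_r (H : Hilbert) (x y : H) : hinner H x (hopp H y) = Copp (hinner H x y).
Proof.
  apply Cx_ext.
  - rewrite inner_Re_sym, inner_opp_l. simpl. rewrite inner_Re_sym. reflexivity.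
  - rewrite inner_Im_sym, inner_opp_l. simpl. rewrite inner_Im_sym. lra.
Qed.

Lemma inner_0r (H : Hilbert) (y : H) : hinner H y (hzero H) = C0.
Proof.
  apply Cx_ext.
  - rewrite inner_Re_sym, inner_0l. reflexivity.
  - rewrite inner_Im_sym, inner_0l. simpl. lra.
Qed.

Definition nsq (H : Hilbert) (x : H) : R := Re (hinner H x x).

Lemma hnorm_nonneg (H : Hilbert) (x : H) : 0 <= hnorm x.
Proof. apply sqrt_pos. Qed.

Lemma hnorm_sq (H : Hilbert) (x : H) : hnorm x * hnorm x = Re (hinner H x x).
Proof. apply sqrt_sqrt, hinner_pos. Qed.

Lemma expand_add (H : Hilbert) (x y : H) :
  Re (hinner H (hadd H x y) (hadd H x y)) =
  Re (hinner H x x) + 2 * Re (hinner H x y) + Re (hinner H y y).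
Proof.
  rewrite hinner_add_l, !inner_add_r. simpl. rewrite (inner_Re_sym H x y). lra.
Qed.

Lemma Re_scal_l (H : Hilbert) (c : Cx) (x y : H) :
  Re (hinner H (hscal H c x) y) = Re c * Re (hinner H x y) - Im c * Im (hinner H x y).
Proof. rewrite hinner_scal_l. reflexivity. Qed.

Lemma Re_scal_r (H : Hilbert) (c : Cx) (x y : H) :
  Re (hinner H x (hscal H c y)) = Re c * Re (hinner H x y) + Im c * Im (hinner H x y).
Proof. rewrite inner_scal_r. simpl. lra. Qed.

Lemma Re_scal_self (H : Hilbert) (c : Cx) (x : H) :
  Re (hinner H (hscal H c x) (hscal H c x)) = (Re c * Re c + Im c * Im c) * Re (hinner H x x).
Proof.
  rewrite hinner_scal_l, inner_scal_r. simpl. rewrite inner_self_Im. ring.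
Qed.

Lemma nsq0_zero (H : Hilbert) (y : H) : Re (hinner H y y) = 0 -> y = hzero H.
Proof.
  intro E. apply hinner_def. apply Cx_ext; simpl; [exact E | apply inner_self_Im].
Qed.

Lemma CS_Re (H : Hilbert) (x y : H) : Rabs (Re (hinner H x y)) <= hnorm x * hnorm y.
Proof.
  set (r := Re (hinner H x y)).
  assert (Hp := hnorm_sq H x). assert (Hq := hnorm_sq H y).
  assert (p0 := hnorm_nonneg H x). assert (q0 := hnorm_nonneg H y).
  destruct (Req_dec (Re (hinner H y y)) 0) as [Hb|Hb].
  - apply nsq0_zero in Hb. unfold r. rewrite Hb, inner_0r. simpl. rewrite Rabs_R0. apply Rmult_le_pos; apply hnorm_nonneg.
  - assert (b0 : 0 < Re (hinner H y y)) by (assert (T := hinner_pos H y); lra).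
    set (t := - r / Re (hinner H y y)).
    assert (Q := hinner_pos H (hadd H x (hscal H (mkC t 0) y))).
    rewrite expand_add, Re_scal_r, Re_scal_self in Q. simpl in Q. fold r in Q.
    assert (r * r <= Re (hinner H x x) * Re (hinner H y y)).
    { unfold t in Q. field_simplify in Q; [|lra].
      apply Rmult_le_compat_r with (r := Re (hinner H y y)) in Q; [|lra].
      unfold Rdiv in Q. rewrite Rmult_assoc, Rinv_l, Rmult_1_r in Q by lra. nra. }
    rewrite <- Hp, <- Hq in H0.
    apply Rsqr_incr_0_var; [rewrite <- Rsqr_abs; unfold Rsqr; nra | nra].
Qed.

Lemma Rabs_le_inv (x a : R) : Rabs x <= a -> -a <= x <= a.
Proof. intro Hx. destruct (Rcase_abs x); [rewrite Rabs_left in Hx | rewrite Rabs_right in Hx]; lra. Qed.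

Lemma CS_Im (H : Hilbert) (x y : H) : Rabs (Im (hinner H x y)) <= hnorm x * hnorm y.
Proof.
  assert (E : Im (hinner H x y) = Re (hinner H (hscal H (mkC 0 (-1)) x) y)).
  { rewrite Re_scal_l. simpl. ring. }
  assert (N : hnorm (hscal H (mkC 0 (-1)) x) = hnorm x).
  { unfold hnorm. rewrite Re_scal_self. simpl. f_equal. ring. }
  rewrite E, <- N. apply CS_Re.
Qed.

Lemma hnorm_scal (H : Hilbert) (c : Cx) (x : H) :
  hnorm (hscal H c x) = sqrt (Re c * Re c + Im c * Im c) * hnorm x.
Proof.
  unfold hnorm. rewrite Re_scal_self. apply sqrt_mult_alt. nra.
Qed.

Lemma hnorm_scal_pos (H : Hilbert) (t : R) (x : H) : 0 <= t ->
  hnorm (hscal H (mkC t 0) x) = t * hnorm x.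
Proof.
  intro. rewrite hnorm_scal. simpl. f_equal.
  replace (t * t + 0 * 0) with (t * t) by ring. apply sqrt_square; auto.
Qed.

Lemma hnorm_triangle (H : Hilbert) (x y : H) : hnorm (hadd H x y) <= hnorm x + hnorm y.
Proof.
  assert (E := expand_add H x y). assert (C := CS_Re H x y).
  rewrite <- !hnorm_sq in E.
  assert (p0 := hnorm_nonneg H x). assert (q0 := hnorm_nonneg H y). assert (s0 := hnorm_nonneg H (hadd H x y)).
  apply Rsqr_incr_0_var; [unfold Rsqr | lra].
  rewrite E. assert (Re (hinner H x y) <= hnorm x * hnorm y) by (eapply Rle_trans; [apply RRle_abs|exact C]).
  nra.
Qed.

Lemma hnorm_opp (H : Hilbert) (x : H) : hnorm (hopp H x) = hnorm x.
Proof. unfold hnorm. rewrite inner_opp_l, inner_opp_r. simpl. f_equal. ring. Qed.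

Lemma hsub_tri (H : Hilbert) (x y : H) : hnorm (hsub x y) <= hnorm x + hnorm y.
Proof. unfold hsub. rewrite <- (hnorm_opp H y). apply hnorm_triangle. Qed.

Lemma hsub_add (H : Hilbert) (x y : H) : hadd H (hsub x y) y = x.
Proof. unfold hsub. rewrite <- hadd_assoc, (hadd_comm H (hopp H y)), hadd_opp, hadd_0. reflexivity. Qed.

Lemma hnorm_rev (H : Hilbert) (x y : H) : hnorm x - hnorm y <= hnorm (hsub x y).
Proof.
  assert (T := hnorm_triangle H (hsub x y) y). rewrite hsub_add in T. lra.
Qed.

Lemma hsub_swap_norm (H : Hilbert) (x y : H) : hnorm (hsub x y) = hnorm (hsub y x).
Proof.
  assert (E : hsub y x = hopp H (hsub x y)).
  { apply opp_unique. unfold hsub at 2. rewrite hadd_assoc, hsub_add, hadd_opp. reflexivity. }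
  rewrite E, hnorm_opp. reflexivity.
Qed.

Lemma hnorm_rev_abs (H : Hilbert) (x y : H) : Rabs (hnorm x - hnorm y) <= hnorm (hsub x y).
Proof.
  assert (A := hnorm_rev H x y). assert (B := hnorm_rev H y x). rewrite hsub_swap_norm in B.
  apply Rabs_le. lra.
Qed.

Lemma lin_zero (H : Hilbert) (A : H -> H) : is_linear H A -> A (hzero H) = hzero H.
Proof. intros [Ha _]. apply idem_zero. rewrite <- Ha, hadd_0. reflexivity. Qed.

Lemma lin_opp (H : Hilbert) (A : H -> H) (x : H) : is_linear H A -> A (hopp H x) = hopp H (A x).
Proof.
  intro L. apply opp_unique. destruct L as [Ha Hs]. rewrite <- Ha, hadd_opp. apply lin_zero. split; auto.
Qed.

Lemma lin_sub (H : Hilbert) (A : H -> H) (x y : H) : is_linear H A -> A (hsub x y) = hsub (A x) (A y).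
Proof. intro L. unfold hsub. rewrite (proj1 L), lin_opp; auto. Qed.

Lemma proj_fix (H : Hilbert) (Q : H -> H) (h : H) : orth_proj H Q -> Ran H Q h -> Q h = h.
Proof. intros [_ [I _]] [y ->]. apply I. Qed.

Lemma proj_contr (H : Hilbert) (Q : H -> H) (x : H) : orth_proj H Q -> hnorm (Q x) <= hnorm x.
Proof.
  intros [L [I S]].
  assert (E : hadd H (Q x) (hsub x (Q x)) = x).
  { unfold hsub. rewrite hadd_comm, <- hadd_assoc, (hadd_comm H (hopp H (Q x))), hadd_opp, hadd_0. reflexivity. }
  assert (Z : Re (hinner H (Q x) (hsub x (Q x))) = 0).
  { unfold hsub. rewrite inner_add_r, inner_opp_r. simpl.
    rewrite (S x (Q x)), I, (S x x). lra. }
  assert (X := expand_add H (Q x) (hsub x (Q x))). rewrite E, Z in X.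
  assert (Y := hinner_pos H (hsub x (Q x))).
  rewrite <- !hnorm_sq in X. rewrite <- hnorm_sq in Y.
  assert (p0 := hnorm_nonneg H x). assert (q0 := hnorm_nonneg H (Q x)).
  apply Rsqr_incr_0_var; unfold Rsqr; nra.
Qed.

Lemma glb_exists (E : R -> Prop) : (exists x, E x) -> (forall x, E x -> 0 <= x) -> is_glb E (Rinf E).
Proof.
  intros [x0 Ex0] Pos.
  assert (B : bound (fun y => E (- y))).
  { exists 0. intros y Ey. apply Pos in Ey. lra. }
  assert (I : exists y, E (- y)) by (exists (- x0); rewrite Ropp_involutive; exact Ex0).
  destruct (completeness _ B I) as [m [Hu Hl]].
  assert (G : is_glb E (- m)).
  { split.
    - intros x Ex. assert (E (- - x)) by (rewrite Ropp_involutive; exact Ex).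
      apply Hu in H. lra.
    - intros b Hb. assert (m <= - b).
      { apply Hl. intros y Ey. apply Hb in Ey. lra. }
      lra. }
  unfold Rinf. apply epsilon_spec. exists (- m). exact G.
Qed.

Lemma glb_le (E : R -> Prop) m x : is_glb E m -> E x -> m <= x.
Proof. intros [A _] Ex. apply A, Ex. Qed.

Lemma glb_ge (E : R -> Prop) m b : is_glb E m -> (forall x, E x -> b <= x) -> b <= m.
Proof. intros [_ A] Hb. apply A, Hb. Qed.

Lemma glb_approx (E : R -> Prop) m e : is_glb E m -> e > 0 -> exists x, E x /\ x < m + e.
Proof.
  intros G He. apply NNPP. intro N.
  assert (m + e <= m).
  { apply (glb_ge E m); auto. intros x Ex. apply Rnot_lt_le. intro Lt. apply N. exists x. auto. }
  lra.
Qed.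

Lemma opnorm_bound (H : Hilbert) (A : H -> H) :
  (exists M, forall x, hnorm (A x) <= M * hnorm x) ->
  forall x, hnorm (A x) <= opnorm H A * hnorm x.
Proof.
  intros [M HM].
  set (E := fun M0 => 0 <= M0 /\ forall x, hnorm (A x) <= M0 * hnorm x).
  assert (G : is_glb E (Rinf E)).
  { apply glb_exists.
    - exists (Rabs M). split; [apply Rabs_pos|]. intro x. eapply Rle_trans; [apply HM|].
      apply Rmult_le_compat_r; [apply hnorm_nonneg | apply RRle_abs].
    - intros y [Hy _]; exact Hy. }
  intro x. unfold opnorm. fold E. apply Rnot_lt_le. intro Lt.
  assert (nx : 0 < hnorm x).
  { destruct (hnorm_nonneg H x) as [|E0]; auto. rewrite <- E0 in Lt.
    assert (0 <= Rinf E) by (apply (glb_ge E); auto; intros y [Hy _]; exact Hy).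
    assert (hnorm (A x) <= 0).
    { destruct (glb_approx E _ 1 G) as [y [[y0 Hy] _]]; [lra|]. specialize (Hy x). rewrite <- E0 in Hy. lra. }
    nra. }
  assert (hnorm (A x) / hnorm x <= Rinf E).
  { apply (glb_ge E); auto. intros y [_ Hy]. specialize (Hy x).
    apply Rmult_le_reg_r with (hnorm x); auto. unfold Rdiv. rewrite Rmult_assoc, Rinv_l, Rmult_1_r; lra. }
  apply Rmult_le_compat_r with (r := hnorm x) in H0; [|lra].
  unfold Rdiv in H0. rewrite Rmult_assoc, Rinv_l, Rmult_1_r in H0; lra.
Qed.

Lemma finite_max (K : nat) (Rl : nat -> nat -> Prop) :
  (forall i, (i <= K)%nat -> exists N, forall n, (n >= N)%nat -> Rl i n) ->
  exists N, forall n, (n >= N)%nat -> forall i, (i <= K)%nat -> Rl i n.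
Proof.
  induction K as [|K IH]; intro Hyp.
  - destruct (Hyp 0%nat (le_n 0)) as [N HN]. exists N. intros n Hn i Hi.
    assert (i = 0%nat) by lia. subst. auto.
  - destruct IH as [N1 H1]. { intros i Hi. apply Hyp. lia. }
    destruct (Hyp (S K) (le_n _)) as [N2 H2].
    exists (Nat.max N1 N2). intros n Hn i Hi.
    destruct (Nat.eq_dec i (S K)) as [->|Ne].
    + apply H2. lia.
    + apply H1; lia.
Qed.

Lemma cover (d : R) : 0 < d -> forall K x, 0 <= x <= INR (S K) * d ->
  exists i, (i <= K)%nat /\ INR i * d <= x <= INR (S i) * d.
Proof.
  intros Hd K. induction K as [|K IH]; intros x Hx.
  - exists 0%nat. split; [lia|]. change (INR 0) with 0; change (INR 1) with 1 in *; lra.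
  - destruct (Rle_dec x (INR (S K) * d)) as [Le|Gt].
    + destruct (IH x) as [i [Hi Hx']]; [lra|]. exists i. split; [lia|lra].
    + exists (S K). split; [lia|lra].
Qed.

Lemma grid (U : Type) (Sp : U -> Prop) (f1 f2 f3 : U -> R) (B d : R) (Q : nat -> R -> R -> R -> Prop) :
  0 < d -> (forall u, Sp u -> Rabs (f1 u) <= B /\ Rabs (f2 u) <= B /\ Rabs (f3 u) <= B) ->
  (forall u, Sp u -> exists N, forall n, (n >= N)%nat -> exists x1 x2 x3, Q n x1 x2 x3 /\
      Rabs (x1 - f1 u) <= d /\ Rabs (x2 - f2 u) <= d /\ Rabs (x3 - f3 u) <= d) ->
  exists N, forall n, (n >= N)%nat -> forall u, Sp u -> exists x1 x2 x3, Q n x1 x2 x3 /\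
      Rabs (x1 - f1 u) <= 2*d /\ Rabs (x2 - f2 u) <= 2*d /\ Rabs (x3 - f3 u) <= 2*d.
Proof.
  intros Hd Bnd Hyp.
  set (inc := fun (f : U -> R) u i => INR i * d <= f u + B <= INR (S i) * d).
  set (cell := fun u i j l => inc f1 u i /\ inc f2 u j /\ inc f3 u l).
  assert (Cell : forall i j l, exists N, forall n, (n >= N)%nat -> forall u, Sp u -> cell u i j l ->
     exists x1 x2 x3, Q n x1 x2 x3 /\
      Rabs (x1 - f1 u) <= 2*d /\ Rabs (x2 - f2 u) <= 2*d /\ Rabs (x3 - f3 u) <= 2*d).
  { intros i j l. destruct (classic (exists u0, Sp u0 /\ cell u0 i j l)) as [[u0 [S0 C0x]]|No].
    - destruct (Hyp u0 S0) as [N HN]. exists N. intros n Hn u Su Cu.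
      destruct (HN n Hn) as [x1 [x2 [x3 [Qx [A1 [A2 A3]]]]]].
      exists x1, x2, x3. split; auto.
      unfold cell, inc in C0x, Cu.
      assert (K : forall a b c, Rabs (a - b) <= d -> Rabs (b - c) <= d -> Rabs (a - c) <= 2 * d).
      { intros a b c P1 P2. replace (a - c) with ((a - b) + (b - c)) by ring.
        eapply Rle_trans; [apply Rabs_triang|lra]. }
      rewrite !S_INR in C0x, Cu. destruct C0x as [[a1 a2] [[b1 b2] [c1 c2]]]. destruct Cu as [[d1 d2] [[e1 e2] [g1 g2]]].
      split; [|split]; [apply (K _ (f1 u0)) | apply (K _ (f2 u0)) | apply (K _ (f3 u0))]; auto; apply Rabs_le; lra.
    - exists 0%nat. intros n _ u Su Cu. exfalso. apply No. exists u. auto. }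
  destruct (INR_unbounded (2 * B / d)) as [K HK].
  assert (HK' : 2 * B <= INR (S K) * d).
  { rewrite S_INR. apply Rmult_lt_compat_r with (r := d) in HK; auto.
    unfold Rdiv in HK. rewrite Rmult_assoc, Rinv_l, Rmult_1_r in HK; lra. }
  destruct (finite_max K (fun i n => forall j l, (j <= K)%nat -> (l <= K)%nat -> forall u, Sp u -> cell u i j l ->
     exists x1 x2 x3, Q n x1 x2 x3 /\
      Rabs (x1 - f1 u) <= 2*d /\ Rabs (x2 - f2 u) <= 2*d /\ Rabs (x3 - f3 u) <= 2*d)) as [N HN].
  { intros i Hi.
    destruct (finite_max K (fun j n => forall l, (l <= K)%nat -> forall u, Sp u -> cell u i j l ->
     exists x1 x2 x3, Q n x1 x2 x3 /\
      Rabs (x1 - f1 u) <= 2*d /\ Rabs (x2 - f2 u) <= 2*d /\ Rabs (x3 - f3 u) <= 2*d)) as [N HN].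
    { intros j Hj.
      destruct (finite_max K (fun l n => forall u, Sp u -> cell u i j l ->
       exists x1 x2 x3, Q n x1 x2 x3 /\
        Rabs (x1 - f1 u) <= 2*d /\ Rabs (x2 - f2 u) <= 2*d /\ Rabs (x3 - f3 u) <= 2*d)) as [N HN].
      { intros l Hl. apply Cell. }
      exists N. intros n Hn l Hl. apply HN; auto. }
    exists N. intros n Hn j l Hj Hl. apply HN; auto. }
  exists N. intros n Hn u Su.
  destruct (Bnd u Su) as [B1 [B2 B3]].
  apply Rabs_le_inv in B1. apply Rabs_le_inv in B2. apply Rabs_le_inv in B3.
  destruct (cover d Hd K (f1 u + B)) as [i [Hi Ci]]; [lra|].
  destruct (cover d Hd K (f2 u + B)) as [j [Hj Cj]]; [lra|].
  destruct (cover d Hd K (f3 u + B)) as [l [Hl Cl]]; [lra|].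
  apply (HN n Hn i Hi j l Hj Hl u Su). unfold cell, inc. auto.
Qed.

Lemma hnorm_scal_real (H : Hilbert) (t : R) (x : H) :
  hnorm (hscal H (mkC t 0) x) = Rabs t * hnorm x.
Proof.
  rewrite hnorm_scal. simpl. f_equal. replace (t * t + 0 * 0) with (Rsqr t) by (unfold Rsqr; ring).
  apply sqrt_Rsqr_abs.
Qed.

Lemma hsub_chain (H : Hilbert) (k g h : H) : hadd H (hsub k g) (hsub g h) = hsub k h.
Proof. unfold hsub at 2. rewrite hadd_assoc, hsub_add. reflexivity. Qed.

Lemma hsub_scal (H : Hilbert) (t : R) (g : H) :
  hsub (hscal H (mkC t 0) g) g = hscal H (mkC (t - 1) 0) g.
Proof.
  unfold hsub. rewrite <- scal_m1, <- hscal_adds. f_equal. apply Cx_ext; simpl; ring.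
Qed.

Lemma ran_mono (H : Hilbert) (P : nat -> H -> H) : filtration H P ->
  forall n0 n g, (n0 <= n)%nat -> Ran H (P n0) g -> Ran H (P n) g.
Proof.
  intros [_ [M _]] n0 n g Le. induction Le; auto.
Qed.

Lemma ran_scal (H : Hilbert) (Q : H -> H) (c : Cx) (g : H) :
  is_linear H Q -> Ran H Q g -> Ran H Q (hscal H c g).
Proof. intros [_ L] [y ->]. exists (hscal H c y). rewrite L. reflexivity. Qed.

Lemma unit_approx (H : Hilbert) (P : nat -> H -> H) (h : H) (eta : R) :
  filtration H P -> hnorm h = 1 -> eta > 0 ->
  exists N, forall n, (n >= N)%nat -> exists k, Ran H (P n) k /\ hnorm k = 1 /\ hnorm (hsub k h) <= eta.
Proof.
  intros F Nh He.
  set (e := Rmin (eta / 2) (1 / 2)).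
  assert (e0 : e > 0) by (unfold e; apply Rmin_glb_lt; lra).
  assert (e1 : e <= eta / 2) by apply Rmin_l. assert (e2 : e <= 1/2) by apply Rmin_r.
  destruct F as [FP [FM FD]].
  destruct (FD h e e0) as [n0 [g [Rg Hg]]].
  assert (Rev := hnorm_rev_abs H h g). rewrite Nh in Rev.
  apply Rabs_le_inv in Rev.
  assert (g0 : hnorm g > 0) by lra.
  exists n0. intros n Hn.
  set (k := hscal H (mkC (/ hnorm g) 0) g).
  exists k. split; [|split].
  - apply ran_scal. apply (FP n). apply (ran_mono H P (conj FP (conj FM FD)) n0); auto.
  - unfold k. rewrite hnorm_scal_real, Rabs_right; [field; lra|]. left. apply Rinv_0_lt_compat; lra.
  - rewrite <- (hsub_chain H k g h). eapply Rle_trans; [apply hnorm_triangle|].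
    unfold k. rewrite hsub_scal, hnorm_scal_real.
    replace (Rabs (/ hnorm g - 1) * hnorm g) with (Rabs (1 - hnorm g)).
    + rewrite hsub_swap_norm. assert (Rabs (1 - hnorm g) <= hnorm (hsub h g)) by (apply Rabs_le; lra). lra.
    + replace (1 - hnorm g) with ((/ hnorm g - 1) * hnorm g) by (field; lra).
      rewrite Rabs_mult, (Rabs_right (hnorm g)); lra.
Qed.

Lemma cont_T (H : Hilbert) (T : H -> H) (M : R) (h k : H) (eta : R) :
  is_linear H T -> 0 <= M -> (forall x, hnorm (T x) <= M * hnorm x) ->
  hnorm h = 1 -> hnorm k = 1 -> hnorm (hsub k h) <= eta ->
  Rabs (Re (hinner H (T k) (T k)) - Re (hinner H (T h) (T h))) <= 2 * M * M * eta /\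
  Rabs (Re (hinner H (T k) k) - Re (hinner H (T h) h)) <= 2 * M * eta /\
  Rabs (Im (hinner H (T k) k) - Im (hinner H (T h) h)) <= 2 * M * eta.
Proof.
  intros L M0 HM Nh Nk Hd.
  assert (D : hnorm (hsub (T k) (T h)) <= M * eta).
  { rewrite <- lin_sub; auto. eapply Rle_trans; [apply HM|]. apply Rmult_le_compat_l; auto. }
  assert (Tk := HM k). assert (Th := HM h). rewrite Nk in Tk. rewrite Nh in Th.
  assert (tk0 := hnorm_nonneg H (T k)). assert (th0 := hnorm_nonneg H (T h)).
  assert (d0 := hnorm_nonneg H (hsub (T k) (T h))).
  assert (E1 : hinner H (T k) k = Cadd (hinner H (hsub (T k) (T h)) k) (hinner H (T h) k))
    by (rewrite <- hinner_add_l, hsub_add; reflexivity).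
  assert (E2 : hinner H (T h) k = Cadd (hinner H (T h) (hsub k h)) (hinner H (T h) h))
    by (rewrite <- inner_add_r, hsub_add; reflexivity).
  assert (C1 := CS_Re H (hsub (T k) (T h)) k). assert (C2 := CS_Re H (T h) (hsub k h)).
  assert (C3 := CS_Im H (hsub (T k) (T h)) k). assert (C4 := CS_Im H (T h) (hsub k h)).
  rewrite Nk in C1, C3.
  assert (sd0 := hnorm_nonneg H (hsub k h)).
  assert (P1 : hnorm (T h) * hnorm (hsub k h) <= M * eta).
  { apply Rmult_le_compat; lra. }
  split; [|split].
  - rewrite <- !hnorm_sq.
    replace (hnorm (T k) * hnorm (T k) - hnorm (T h) * hnorm (T h))
      with ((hnorm (T k) - hnorm (T h)) * (hnorm (T k) + hnorm (T h))) by ring.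
    rewrite Rabs_mult. assert (R1 := hnorm_rev_abs H (T k) (T h)).
    rewrite (Rabs_right (hnorm (T k) + hnorm (T h))) by lra.
    replace (2 * M * M * eta) with ((M * eta) * (2 * M)) by ring.
    apply Rmult_le_compat; try lra; apply Rabs_pos.
  - rewrite E1, E2. simpl.
    replace (Re (hinner H (hsub (T k) (T h)) k) + (Re (hinner H (T h) (hsub k h)) + Re (hinner H (T h) h)) -
       Re (hinner H (T h) h)) with (Re (hinner H (hsub (T k) (T h)) k) + Re (hinner H (T h) (hsub k h))) by ring.
    eapply Rle_trans; [apply Rabs_triang|]. lra.
  - rewrite E1, E2. simpl.
    replace (Im (hinner H (hsub (T k) (T h)) k) + (Im (hinner H (T h) (hsub k h)) + Im (hinner H (T h) h)) -
       Im (hinner H (T h) h)) with (Im (hinner H (hsub (T k) (T h)) k) + Im (hinner H (T h) (hsub k h))) by ring.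
    eapply Rle_trans; [apply Rabs_triang|]. lra.
Qed.

Lemma expand_Tz (H : Hilbert) (T : H -> H) (z : Cx) (k : H) : hnorm k = 1 ->
  hnorm (hsub (T k) (hscal H z k)) * hnorm (hsub (T k) (hscal H z k)) =
  Re (hinner H (T k) (T k)) - 2 * (Re z * Re (hinner H (T k) k) + Im z * Im (hinner H (T k) k))
  + (Re z * Re z + Im z * Im z).
Proof.
  intro Nk. assert (K1 := hnorm_sq H k). rewrite Nk in K1.
  rewrite hnorm_sq. unfold hsub. rewrite expand_add, inner_opp_r, inner_opp_l, inner_opp_r. simpl.
  rewrite Re_scal_r, Re_scal_self, <- K1. ring.
Qed.

Lemma neg_prod_le (a b dl : R) : Rabs b <= dl -> - (a * b) <= Rabs a * dl.
Proof.
  intro Hb. assert (A := Rabs_pos a). assert (- (a * b) <= Rabs (a * b)).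
  { rewrite <- Rabs_Ropp. apply RRle_abs. }
  rewrite Rabs_mult in H. assert (Rabs a * Rabs b <= Rabs a * dl) by (apply Rmult_le_compat_l; auto). lra.
Qed.

Lemma key_ineq (x y M dl e s zr zi da dr di : R) :
  0 <= x -> 0 <= y -> 0 <= M -> 0 < dl -> 0 < e -> dl <= e / 5 ->
  dl * (1 + 4 * (2 * M + 1)) <= e * e ->
  y * y = x * x + da - 2 * zr * dr - 2 * zi * di ->
  Rabs da <= dl -> Rabs dr <= dl -> Rabs di <= dl ->
  Rabs zr <= s -> Rabs zi <= s -> s - M <= x -> 0 <= s ->
  y <= x + e.
Proof.
  intros x0 y0 M0 d0 e0 de dM Ey Ha Hr Hi Zr Zi Xs s0.
  assert (P1 := neg_prod_le zr dr dl Hr). assert (P2 := neg_prod_le zi di dl Hi).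
  apply Rabs_le_inv in Ha.
  assert (Y : y * y <= x * x + dl * (1 + 4 * s)).
  { rewrite Ey. assert (Rabs zr * dl <= s * dl) by (apply Rmult_le_compat_r; lra).
    assert (Rabs zi * dl <= s * dl) by (apply Rmult_le_compat_r; lra). nra. }
  destruct (Rle_dec s (2 * M + 1)) as [Ls|Gs].
  - assert (dl * (1 + 4 * s) <= e * e).
    { eapply Rle_trans; [|exact dM]. apply Rmult_le_compat_l; lra. }
    apply Rsqr_incr_0_var; unfold Rsqr; nra.
  - assert (dl * (1 + 4 * s) <= 8 * dl * x) by nra.
    assert (y <= x + 4 * dl) by (apply Rsqr_incr_0_var; unfold Rsqr; nra).
    lra.
Qed.

Lemma off_diag_bounded (H : Hilbert) (T Q : H -> H) (M : R) :
  orth_proj H Q -> (forall x, hnorm (T x) <= M * hnorm x) -> 0 <= M ->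
  exists M', forall x, hnorm (off_diag H Q T x) <= M' * hnorm x.
Proof.
  intros OP HM M0. exists (2 * M). intro x. unfold off_diag.
  eapply Rle_trans; [apply hsub_tri|].
  assert (A := proj_contr H Q (T (Q x)) OP). assert (B := HM (Q x)).
  assert (C := proj_contr H Q x OP).
  assert (M * hnorm (Q x) <= M * hnorm x) by (apply Rmult_le_compat_l; auto). lra.
Qed.

Theorem theorem3p5 (H : Hilbert) (T : H -> H) (P : nat -> H -> H) :
  bounded_op H T ->
  quasitriangular H T ->
  filtration H P ->
  Un_cv (fun n => opnorm H (off_diag H (P n) T)) 0 ->
  forall eps, eps > 0 -> exists N, forall n, (n >= N)%nat -> forall z : Cx,
    Rabs (j_compression H (P n) T z - jfun H T z) < eps.
Proof.
  intros [TL [M1 HM1]] _ F Cv eps He.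
  set (M := Rabs M1).
  assert (M0 : 0 <= M) by apply Rabs_pos.
  assert (HM : forall x, hnorm (T x) <= M * hnorm x).
  { intro x. eapply Rle_trans; [apply HM1|]. apply Rmult_le_compat_r; [apply hnorm_nonneg | apply RRle_abs]. }
  destruct (classic (exists u : H, hnorm u = 1)) as [[u Nu] | NoU].
  2: { exists 0%nat. intros n _ z. unfold j_compression, jfun, j_on.
       replace (fun r : R => exists h : H, Ran H (P n) h /\ hnorm h = 1 /\ r = hnorm (hsub (P n (T h)) (hscal H z h)))
         with (fun _ : R => False).
       replace (fun r : R => exists h : H, True /\ hnorm h = 1 /\ r = hnorm (hsub (T h) (hscal H z h)))
         with (fun _ : R => False).
       - rewrite Rminus_diag, Rabs_R0. lra.
       - apply functional_extensionality; intro r; apply propositional_extensionality; split;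
           [contradiction | intros [h [_ [Hh _]]]; apply NoU; exists h; auto].
       - apply functional_extensionality; intro r; apply propositional_extensionality; split;
           [contradiction | intros [h [_ [Hh _]]]; apply NoU; exists h; auto]. }
  set (e := eps / 3).
  assert (e0 : 0 < e) by (unfold e; lra).
  set (dl := Rmin (e / 5) (e * e / (1 + 4 * (2 * M + 1)))).
  assert (dl0 : 0 < dl).
  { unfold dl. apply Rmin_glb_lt; [lra|]. apply Rdiv_lt_0_compat; nra. }
  assert (dl1 : dl <= e / 5) by apply Rmin_l.
  assert (dl2 : dl * (1 + 4 * (2 * M + 1)) <= e * e).
  { assert (dl <= e * e / (1 + 4 * (2 * M + 1))) by apply Rmin_r.
    apply Rmult_le_compat_r with (r := 1 + 4 * (2 * M + 1)) in H0; [|lra].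
    unfold Rdiv in H0. rewrite Rmult_assoc, Rinv_l, Rmult_1_r in H0; lra. }
  set (d := dl / 2).
  assert (d0 : 0 < d) by (unfold d; lra).
  set (eta := d / (2 * M * M + 2 * M + 1)).
  assert (eta0 : 0 < eta) by (unfold eta; apply Rdiv_lt_0_compat; nra).
  assert (eta1 : 2 * M * M * eta <= d /\ 2 * M * eta <= d).
  { assert (eta * (2 * M * M + 2 * M + 1) = d) by (unfold eta; field; nra).
    split; nra. }
  set (f1 := fun h : H => Re (hinner H (T h) (T h))).
  set (f2 := fun h : H => Re (hinner H (T h) h)).
  set (f3 := fun h : H => Im (hinner H (T h) h)).
  destruct (grid H (fun h => hnorm h = 1) f1 f2 f3 (M * M + M) d
     (fun n x1 x2 x3 => exists k, Ran H (P n) k /\ hnorm k = 1 /\ x1 = f1 k /\ x2 = f2 k /\ x3 = f3 k) d0)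
     as [N2 HN2].
  { intros h Nh. assert (Th := HM h). rewrite Nh, Rmult_1_r in Th. assert (t0 := hnorm_nonneg H (T h)).
    unfold f1, f2, f3. rewrite <- hnorm_sq. rewrite Rabs_right by nra.
    assert (C1 := CS_Re H (T h) h). assert (C2 := CS_Im H (T h) h). rewrite Nh, Rmult_1_r in C1, C2.
    split; [|split]; nra. }
  { intros h Nh. destruct (unit_approx H P h eta F Nh eta0) as [N HN].
    exists N. intros n Hn. destruct (HN n Hn) as [k [Rk [Nk Dk]]].
    destruct (cont_T H T M h k eta TL M0 HM Nh Nk Dk) as [A1 [A2 A3]].
    exists (f1 k), (f2 k), (f3 k). split; [exists k; auto|].
    unfold f1, f2, f3. split; [|split]; lra. }
  destruct (Cv e e0) as [N1 HN1].
  exists (Nat.max N1 N2). intros n Hn z.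
  assert (Dn : Rabs (opnorm H (off_diag H (P n) T)) < e).
  { assert (X := HN1 n ltac:(lia)). unfold R_dist in X. rewrite Rminus_0_r in X. exact X. }
  apply Rabs_def2 in Dn. destruct Dn as [Dn1 Dn2].
  destruct (HN2 n ltac:(lia) u Nu) as [x1 [x2 [x3 [[k0 [Rk0 [Nk0 _]]] _]]]].
  destruct (proj1 F n) as [OP _].
  unfold j_compression, jfun, j_on.
  set (Jn := fun r : R => exists h : H, Ran H (P n) h /\ hnorm h = 1 /\ r = hnorm (hsub (P n (T h)) (hscal H z h))).
  set (JT := fun r : R => exists h : H, True /\ hnorm h = 1 /\ r = hnorm (hsub (T h) (hscal H z h))).
  assert (Gn : is_glb Jn (Rinf Jn)).
  { apply glb_exists.
    - exists (hnorm (hsub (P n (T k0)) (hscal H z k0))). exists k0. auto.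
    - intros r [h [_ [_ ->]]]. apply hnorm_nonneg. }
  assert (GT : is_glb JT (Rinf JT)).
  { apply glb_exists.
    - exists (hnorm (hsub (T u) (hscal H z u))). exists u. auto.
    - intros r [h [_ [_ ->]]]. apply hnorm_nonneg. }
  assert (Easy : Rinf JT - opnorm H (off_diag H (P n) T) <= Rinf Jn).
  { apply (glb_ge Jn); auto. intros r [h [Rh [Nh ->]]].
    assert (Ph := proj_fix H (P n) h OP Rh).
    assert (Bd := opnorm_bound H (off_diag H (P n) T)
                    (off_diag_bounded H T (P n) M OP HM M0) h).
    change (off_diag H (P n) T h) with (hsub (T (P n h)) (P n (T (P n h)))) in Bd. rewrite Ph, Nh, Rmult_1_r in Bd.
    assert (E : hsub (T h) (hscal H z h) = hadd H (hsub (T h) (P n (T h))) (hsub (P n (T h)) (hscal H z h))).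
    { rewrite hsub_chain. reflexivity. }
    assert (L : Rinf JT <= hnorm (hsub (T h) (hscal H z h))).
    { apply (glb_le JT); auto. exists h. auto. }
    rewrite E in L. assert (Tr := hnorm_triangle H (hsub (T h) (P n (T h))) (hsub (P n (T h)) (hscal H z h))).
    lra. }
  assert (Hard : Rinf Jn <= Rinf JT + 2 * e).
  { destruct (glb_approx JT (Rinf JT) e GT e0) as [r [[h [_ [Nh ->]]] Lr]].
    destruct (HN2 n ltac:(lia) h Nh) as [y1 [y2 [y3 [[k [Rk [Nk [-> [-> ->]]]]] [B1 [B2 B3]]]]]].
    assert (L1 : Rinf Jn <= hnorm (hsub (P n (T k)) (hscal H z k))).
    { apply (glb_le Jn); auto. exists k. auto. }
    assert (L2 : hnorm (hsub (P n (T k)) (hscal H z k)) <= hnorm (hsub (T k) (hscal H z k))).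
    { assert (Pk := proj_fix H (P n) k OP Rk).
      replace (hsub (P n (T k)) (hscal H z k)) with (P n (hsub (T k) (hscal H z k))).
      - apply proj_contr; auto.
      - rewrite lin_sub by (apply (proj1 OP)). rewrite (proj2 (proj1 OP)), Pk. reflexivity. }
    set (s := sqrt (Re z * Re z + Im z * Im z)).
    assert (s0 : 0 <= s) by apply sqrt_pos.
    assert (ss : s * s = Re z * Re z + Im z * Im z) by (apply sqrt_sqrt; nra).
    assert (Zr : Rabs (Re z) <= s).
    { apply Rsqr_incr_0_var; auto. rewrite <- Rsqr_abs. unfold Rsqr. nra. }
    assert (Zi : Rabs (Im z) <= s).
    { apply Rsqr_incr_0_var; auto. rewrite <- Rsqr_abs. unfold Rsqr. nra. }
    assert (Xs : s - M <= hnorm (hsub (T h) (hscal H z h))).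
    { assert (R1 := hnorm_rev H (hscal H z h) (T h)). rewrite hsub_swap_norm in R1.
      rewrite hnorm_scal, Nh, Rmult_1_r in R1. fold s in R1.
      assert (Th := HM h). rewrite Nh, Rmult_1_r in Th. lra. }
    assert (Ek := expand_Tz H T z k Nk). assert (Eh := expand_Tz H T z h Nh).
    assert (K := key_ineq (hnorm (hsub (T h) (hscal H z h))) (hnorm (hsub (T k) (hscal H z k)))
        M dl e s (Re z) (Im z) (f1 k - f1 h) (f2 k - f2 h) (f3 k - f3 h)
        ltac:(apply hnorm_nonneg) ltac:(apply hnorm_nonneg) M0 dl0 e0 dl1 dl2).
    assert (Eq : hnorm (hsub (T k) (hscal H z k)) * hnorm (hsub (T k) (hscal H z k)) =
      hnorm (hsub (T h) (hscal H z h)) * hnorm (hsub (T h) (hscal H z h)) + (f1 k - f1 h) -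
      2 * Re z * (f2 k - f2 h) - 2 * Im z * (f3 k - f3 h)).
    { rewrite Ek, Eh. unfold f1, f2, f3. ring. }
    assert (2 * d = dl) by (unfold d; field).
    specialize (K Eq ltac:(lra) ltac:(lra) ltac:(lra) Zr Zi Xs s0).
    lra. }
  assert (3 * e = eps) by (unfold e; field). apply Rabs_def1; lra.
Qed.
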